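(* Let $T$ be a compact metric space and $K\subset T$ closed. The set $C_K^+=\{M\in M_p(\mathbb{C}_0):\forall f\in[M],\ f\not<_K\max(M)\}$ is $\mathcal M_p$-measurable, and for every continuous function $g$ defined (at least) on $K$, the set $C_K^-(g)=\{M\in M_p(\mathbb{C}_0):\forall f\in[M],\ f<_Kg\}$ is $\mathcal M_p$-measurable.
   Context: $\mathbb{C}_0$ is the set of continuous $f:T\to[0,\infty)$ not identically zero, with the sup norm. $M_p(\mathbb{C}_0)$ is the set of point measures $M=\sum_{i\in I}\delta_{f_i}$ on $\mathbb{C}_0$ ($I$ countable) with $\{i:\|f_i\|>\varepsilon\}$ finite for all $\varepsilon>0$; $\mathcal M_p$ is the $\sigma$-algebra generated by the maps $M\mapsto M(A)$, $A\subset\mathbb{C}_0$ Borel. $[M]$ is the set of atoms of $M$, $\max(M)(s)=\max\{f(s):f\in[M]\}$ ($0$ if $M=0$). For $f,g$ on $K$: $f<_Kg$ iff $f(s)<g(s)$ for all $s\in K$; $f\not<_Kg$ iff $f(s)\ge g(s)$ for some $s\in K$. *)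

(* Defs.v *)
From HB Require Import structures.
From mathcomp Require Import all_boot all_order all_algebra.
From mathcomp Require Import all_classical all_reals all_analysis.
From mathcomp Require Import measurable_realfun.
Set Implicit Arguments. Unset Strict Implicit. Unset Printing Implicit Defensive.
Import Order.TTheory GRing.Theory Num.Theory.
Import numFieldNormedType.Exports.
Local Open Scope classical_set_scope.
Local Open Scope ring_scope.

Section Defs.
Context {R : realType} {T : pseudoMetricType R}.

Definition supnorm (f : T -> R) : R := sup (range (fun t => `|f t|)).
Definition supdist (f g : T -> R) : R := sup (range (fun t => `|f t - g t|)).

Definition C0 : set (T -> R) :=
  [set f : T -> R | continuous f /\ (forall t, 0 <= f t) /\ exists t, f t != 0].

Definition C0_open (U : set (T -> R)) : Prop :=
  U `<=` C0 /\ forall f, U f -> exists2 e : R, 0 < e &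
    forall g, C0 g -> supdist f g < e -> U g.

Definition C0_borel : set (set (T -> R)) := <<s C0, C0_open >>.

(* A point measure M = sum_i delta_{f_i} is represented by its multiplicity
   function m : f |-> #{i | f_i = f}. *)
Definition is_pm (m : (T -> R) -> nat) : Prop :=
  (forall f, (0 < m f)%N -> C0 f) /\
  forall e : R, 0 < e -> finite_set [set f | (0 < m f)%N /\ e < supnorm f].

Definition Mp : set ((T -> R) -> nat) := [set m | is_pm m].

Definition pm_count (m : (T -> R) -> nat) (A : set (T -> R)) : \bar R :=
  (\esum_(f in A) ((m f)%:R)%:E)%E.

Definition Mp_gen : set (set ((T -> R) -> nat)) :=
  [set S | exists (A : set (T -> R)) (B : set (\bar R)),
     [/\ C0_borel A, measurable (B : set (\bar R)) & S = [set m | Mp m /\ B (pm_count m A)]]].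

Definition Mp_measurable : set (set ((T -> R) -> nat)) := <<s Mp, Mp_gen >>.

Definition atoms (m : (T -> R) -> nat) : set (T -> R) := [set f | (0 < m f)%N].

(* max(M)(s) = max {f(s) : f in [M]}, 0 if M = 0 (all f(s) >= 0) *)
Definition maxM (m : (T -> R) -> nat) (s : T) : R :=
  sup ([set 0] `|` [set f s | f in atoms m]).

Definition CKplus (K : set T) : set ((T -> R) -> nat) :=
  [set m | Mp m /\ forall f, atoms m f -> exists2 s, K s & maxM m s <= f s].

Definition CKminus (K : set T) (g : T -> R) : set ((T -> R) -> nat) :=
  [set m | Mp m /\ forall f, atoms m f -> forall s, K s -> f s < g s].

End Defs.

(* Main.v *)
Require Import Defs.
From HB Require Import structures.
From mathcomp Require Import all_boot all_order all_algebra.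
From mathcomp Require Import all_classical all_reals all_analysis.
From mathcomp Require Import measurable_realfun.
From mathcomp Require Import finmap.
From mathcomp Require Import lra.
Import Order.TTheory GRing.Theory Num.Theory.
Import numFieldNormedType.Exports.
Local Open Scope classical_set_scope.
Local Open Scope ring_scope.

Section P.
Context {T : topologicalType} (a : T).
Definition Tp : Type := T.
HB.instance Definition _ := Topological.copy Tp T.
HB.instance Definition _ := isPointed.Build Tp a.
Lemma compact_cov (A : set T) : compact A -> cover_compact A.
Proof.
move=> hA. have : @compact Tp A by [].
by rewrite compact_cover.
Qed.
End P.

Lemma compact_cov' {T : topologicalType} (A : set T) : compact A -> cover_compact A.
Proof.
move=> hA; case: (pselect (A !=set0)) => [[a _]|A0]; first exact: (compact_cov a).
have -> : A = set0 by apply/seteqP; split => // x Ax; apply: A0; exists x.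
move=> I D f _ _; by exists fset0%fset.
Qed.

Section S.
Context {R : realType} {T : pseudoMetricType R}.
Hypothesis cT : compact [set: T].

Lemma cont_ub (phi : T -> R) : continuous phi -> has_ubound (range phi).
Proof.
move=> cphi; apply: bounded_fun_has_ubound.
have := continuous_compact (continuous_subspaceT (A := [set: T]) cphi) cT.
move=> h; have h2 := (@compact_bounded R R^o _ h). case: h2 => M0 [M0r HM]; exists M0; split => // M hM x _; apply: (HM M hM); by exists x.
Qed.

Lemma le_supdist (f g : T -> R) t : continuous f -> continuous g ->
  `|f t - g t| <= supdist f g.
Proof.
move=> cf cg; apply: ub_le_sup; last by exists t.
apply: cont_ub.
move=> x; apply: cvg_norm; apply: cvgB; [exact: cf|exact: cg].
Qed.

Lemma min_list (r : T -> R) (l : seq T) :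
  (forall x, x \in l -> 0 < r x) ->
  0 < foldr (fun x a => Num.min (r x) a) 1 l /\ forall x, x \in l -> foldr (fun x a => Num.min (r x) a) 1 l <= r x.
Proof.
elim: l => [|y l IH] /= hr; first by split => //.
have [h1 h2] := IH (fun x hx => hr x (@mem_behead _ (y :: l) _ hx)).
split; first by rewrite lt_min hr ?mem_head.
move=> x; rewrite inE => /orP[/eqP->|hx]; first by rewrite ge_min lexx.
by rewrite ge_min (h2 x hx) orbT.
Qed.

Lemma cover_fin (A : set T) (Q : T -> R -> T -> Prop) : compact A ->
  (forall s, A s -> exists r, 0 < r /\ exists U, nbhs s U /\ forall t, A t -> U t -> Q s r t) ->
  exists d, 0 < d /\ exists l : seq T, (forall x, x \in l -> A x) /\ forall t, A t -> exists x, x \in l /\ exists r, d <= r /\ Q x r t.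
Proof.
move=> hA hQ.
have /choice [rO hrO] : forall s, exists p : R * set T, A s -> 0 < p.1 /\
    open p.2 /\ p.2 s /\ forall t, A t -> p.2 t -> Q s p.1 t.
  move=> s; case: (pselect (A s)) => As; last by exists (1, set0).
  have [r [r0 [U [Us HU]]]] := hQ s As; exists (r, U°) => _ /=.
  split => //; split; first exact: open_interior.
  by split => // t At /interior_subset; apply: HU.
have hc := compact_cov' A hA.
have H1 : forall i, A i -> open (rO i).2 by move=> i /hrO [_ []].
have H2 : A `<=` cover A (fun s => (rO s).2).
  by move=> t At; exists t => //; have [_ [_ []]] := hrO t At.
have [D' sD' cD'] := hc T A _ H1 H2.
have hpos : forall x, x \in enum_fset D' -> 0 < (rO x).1.
  by move=> x /sD'; rewrite in_setE => /hrO [].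
have [d0 dle] := @min_list (fun x => (rO x).1) (enum_fset D') hpos.
exists (foldr (fun x a => Num.min ((rO x).1) a) 1 (enum_fset D')); split => //.
exists (enum_fset D'); split; first by move=> x /sD'; rewrite in_setE.
move=> t At; have [x /= xD' Oxt] := cD' t At.
exists x; split => //; exists (rO x).1; split; first exact: dle.
have Ax : A x by have := sD' x xD'; rewrite in_setE.
by have [_ [_ [_ H]]] := hrO x Ax; apply: H.
Qed.

Lemma cont_ball (f : T -> R) s : {for s, continuous f} ->
  forall e, 0 < e -> exists2 r, 0 < r & forall z, ball s r z -> `|f s - f z| < e.
Proof.
move=> cf e e0; have := (cvgrPdist_lt _ _).1 cf e e0.
move=> /(_ (nbhs_filter s)) /nbhs_ballP [r r0 H]; exists r => // z /H.
Qed.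

Lemma unif_cont (f : T -> R) : continuous f -> forall c, 0 < c ->
  exists2 eta, 0 < eta & forall y z, ball y eta z -> `|f y - f z| <= c.
Proof.
move=> cf c c0.
pose Q := fun (s : T) r t => forall z, ball t r z -> `|f t - f z| <= c.
have H0 : forall s, [set: T] s -> exists r, 0 < r /\ exists U, nbhs s U /\
    forall t, [set: T] t -> U t -> Q s r t.
  move=> s _.
  have [r r0 H] := @cont_ball f s (cf s) (c/2) ltac:(by rewrite divr_gt0).
  exists (r/2); split; first by rewrite divr_gt0.
  exists (ball s (r/2)); split; first by apply: nbhsx_ballx; rewrite divr_gt0.
  move=> t _ st z tz.
  have sz : ball s r z.
    by rewrite (splitr r); apply: ball_triangle st tz.
  have st' : ball s r t.
 by apply: le_ball st; lra.
  have := H t st'; have := H z sz.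
  rewrite (distrC (f s) (f t)) => h1 h2.
  have := ler_distD (f s) (f t) (f z); lra.
have [d [d0 [l [_ Hl]]]] := @cover_fin [set: T] Q cT H0.
exists d => // y z yz; have [x [_ [r [dr H]]]] := Hl y Logic.I.
by apply: H; apply: le_ball yz.
Qed.

Lemma nets (e : R) : 0 < e -> exists l : seq T, forall t, exists x, x \in l /\ ball x e t.
Proof.
move=> e0; pose Q := fun (x : T) (r : R) t => ball x e t.
have H0 : forall s, [set: T] s -> exists r, 0 < r /\ exists U, nbhs s U /\
    forall t, [set: T] t -> U t -> Q s r t.
  move=> s _; exists 1; split => //; exists (ball s e); split; first exact: nbhsx_ballx.
  by move=> t _.
have [d [d0 [l [_ Hl]]]] := @cover_fin [set: T] Q cT H0.
exists l => t; have [x [xl [r [_ H]]]] := Hl t Logic.I; by exists x.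
Qed.

Lemma le_supnorm (f : T -> R) t : continuous f -> `|f t| <= supnorm f.
Proof.
move=> cf; apply: ub_le_sup; last by exists t.
apply: cont_ub => x; apply: cvg_norm; exact: cf.
Qed.

Lemma open_viol (I : Type) (Phi : I -> (T -> R) -> R) (c : R) :
  (forall i g h d, C0 g -> C0 h -> 0 <= d -> (forall t, `|g t - h t| <= d) ->
     Phi i g - 2 * d <= Phi i h) ->
  C0_open [set g | C0 g /\ exists i, c < Phi i g].
Proof.
move=> HP; split; first by move=> g [].
move=> g [Cg [i hi]]; exists ((Phi i g - c)/2); first by rewrite divr_gt0 // subr_gt0.
move=> h Ch hd; split => //; exists i.
have [cg [_ [t0 _]]] := Cg; have [ch _] := Ch.
have d0 : 0 <= supdist g h := le_trans (normr_ge0 _) (@le_supdist g h t0 cg ch).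
have := HP i g h (supdist g h) Cg Ch d0 (fun t => @le_supdist g h t cg ch); lra.
Qed.

Lemma borel_open (U : set (T -> R)) : C0_open U -> C0_borel U.
Proof. by move=> hU; apply: sub_gen_smallest. Qed.

Lemma borel_diff (A : set (T -> R)) : C0_borel A -> C0_borel (C0 `\` A).
Proof. by have [_ h _] := smallest_sigma_algebra (@C0 R T) C0_open; apply: h. Qed.

Lemma borel0 : C0_borel (set0 : set (T -> R)).
Proof. by have [h _ _] := smallest_sigma_algebra (@C0 R T) C0_open. Qed.

Lemma fin_ub (B : set R) : finite_set B -> exists M, forall x, B x -> x <= M.
Proof.
move=> fB; have := @compact_bounded R R^o _ (finite_compact fB).
case => M0 [M0r HM]; exists (M0 + 1) => x Bx.
have := HM (M0 + 1) ltac:(lra) x Bx => /= h.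
exact: le_trans (ler_norm x) h.
Qed.

Lemma maxM_ub (m : (T -> R) -> nat) : Mp m -> forall s, has_ubound ([set 0] `|` [set f s | f in atoms m]).
Proof.
move=> [hC hfin] s.
have fF := hfin 1 ltr01.
have [M HM] := @fin_ub _ (finite_image supnorm fF).
exists (Num.max 1 M) => x [->|[f af <-]]; first by rewrite le_max ler01.
have [cf _] := hC f af.
have h1 := le_trans (ler_norm (f s)) (@le_supnorm f s cf).
case: (leP (supnorm f) 1) => h2.
  by rewrite le_max (le_trans h1 h2).
rewrite le_max; apply/orP; right; apply: le_trans h1 _.
by apply: HM; exists f.
Qed.

Lemma maxM_ge (m : (T -> R) -> nat) f s : Mp m -> atoms m f -> f s <= maxM m s.
Proof. by move=> hm af; rewrite /maxM; apply: (ub_le_sup (@maxM_ub m hm s)); right; exists f. Qed.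

Lemma maxM_gt (m : (T -> R) -> nat) (f : T -> R) s : 0 <= f s -> f s < maxM m s -> exists g, atoms m g /\ f s < g s.
Proof.
move=> f0 /(sup_gt (ex_intro _ 0 (or_introl erefl))) [y [->|[g ag <-]]] h.
  lra.
by exists g.
Qed.

Lemma zip_ex (x : T) (s : seq T) (q : seq rat) : x \in s -> size s = size q ->
  exists a, (x, a) \in zip s q.
Proof.
elim: s q => [|y s IH] [|a q] //= xs [] hsz.
move: xs; rewrite inE => /orP[/eqP->|xs]; first by exists a; rewrite inE eqxx.
by have [b hb] := IH q xs hsz; exists b; rewrite inE hb orbT.
Qed.

Lemma zip_map_mem (phi : T -> rat) (s : seq T) p : p \in zip s (map phi s) -> p.2 = phi p.1.
Proof.
elim: s => [|y s IH] //=; rewrite inE => /orP[/eqP->//|]; exact: IH.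
Qed.

Variable N : nat -> seq T.
Hypothesis hN : forall n t, exists x, x \in N n /\ ball x (n.+1%:R^-1) t.

Definition Idx := (nat * seq rat * rat)%type.
Definition eta (n : nat) : R := n.+1%:R^-1.

Definition Ub (i : Idx) : set (T -> R) := [set g | C0 g /\ (0 < i.2)%R /\
  size (N i.1.1) = size i.1.2 /\
  (forall y z, ball y (eta i.1.1) z -> `|g y - g z| <= ratr i.2) /\
  forall p, p \in zip (N i.1.1) i.1.2 -> `|g p.1 - ratr p.2| <= ratr i.2].

Lemma Ub_close i g h : Ub i g -> Ub i h -> forall t, `|g t - h t| <= 4 * ratr i.2.
Proof.
move: i => [[n q] c] /= [_ [_ [hs [mg eg]]]] [_ [_ [_ [mh eh]]]] t.
have [x [xN xt]] := hN n t.
have [a xa] := @zip_ex x _ _ xN hs.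
have h1 := mg x t xt; have h2 := mh x t xt.
have h3 := eg _ xa; have h4 := eh _ xa; move: h3 h4 => /= h3 h4.
have := ler_distD (g x) (g t) (h t); have := ler_distD (ratr a) (g x) (h t).
have := ler_distD (h x) (ratr a) (h t).
have := distrC (g x) (g t); have := distrC (g x) (ratr a); have := distrC (h x) (ratr a).
lra.
Qed.

Lemma Ub_cover f (c : rat) : C0 f -> (0 < c)%R -> exists n q, Ub (n, q, c) f.
Proof.
move=> Cf c0; have [cf _] := Cf.
have c0' : 0 < ratr c :> R by rewrite ltr0q.
have [e e0 He] := @unif_cont f cf _ c0'.
pose n := Num.trunc (e^-1).
have hn : eta n <= e.
  have := truncnS_gt (e^-1); rewrite -/n => h.
  rewrite /eta -(invrK e) lef_pV2 ?posrE ?invr_gt0 ?ltr0n //; exact: ltW.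
have /choice [phi hphi] : forall x : T, exists a : rat, `|f x - ratr a| <= ratr c.
  move=> x; have [a] := @rat_in_itvoo R (f x - ratr c) (f x + ratr c) ltac:(lra).
  rewrite in_itv /= => /andP[h1 h2]; exists a; apply/ltW; rewrite ltr_norml.
  apply/andP; split; lra.
exists n, (map phi (N n)); split => //; split => //; split; first by rewrite size_map.
split; first by move=> y z yz; apply: He; apply: le_ball yz.
by move=> p /zip_map_mem /= ->.
Qed.

Lemma Ub_borel i : C0_borel (Ub i).
Proof.
move: i => [[n q] c].
case: (boolP ((0 < c)%R && (size (N n) == size q))) => hc; last first.
  have -> : Ub (n, q, c) = set0.
    apply/seteqP; split => // g [_ [c0 [hs _]]]; move/negP: hc; apply.
    by rewrite c0 hs eqxx.
  exact: borel0.
have c0' : 0 < ratr c :> R by rewrite ltr0q; case/andP: hc.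
pose Phi (j : (T * T + T * rat)%type) (g : T -> R) : R := match j with
  | inl yz => if `[< ball yz.1 (eta n) yz.2 >] then `|g yz.1 - g yz.2| else 0
  | inr p => if p \in zip (N n) q then `|g p.1 - ratr p.2| else 0 end.
have -> : Ub (n, q, c) = C0 `\` [set g | C0 g /\ exists j, ratr c < Phi j g].
  apply/seteqP; split.
  - move=> g [Cg [c0 [hs [hm he]]]]; split => // -[_ [[[y z]|p]]] /=.
      by case: asboolP => [b|_]; [have := hm y z b|]; lra.
    by case: ifP => [/he|_]; [move=> h|]; lra.
  - move=> g [Cg hV]; move: hc => /andP[c0 /eqP hs].
    split => //; split => //; split => //; split.
      move=> y z b; rewrite leNgt; apply/negP => h; apply: hV; split => //.
      by exists (inl (y, z)); rewrite /= asboolT.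
    move=> p pin; rewrite leNgt; apply/negP => h; apply: hV; split => //.
    by exists (inr p); rewrite /= pin.
apply: borel_diff; apply: borel_open; apply: open_viol.
move=> [[y z]|p] g h d Cg Ch d0 hd /=.
  case: asboolP => _; last lra.
  have := hd y; have := hd z; have := ler_distD (h y) (g y) (g z).
  have := ler_distD (h z) (h y) (g z); have := distrC (h z) (g z); lra.
case: ifP => _; last lra.
have := hd p.1; have := ler_distD (h p.1) (g p.1) (ratr p.2); lra.
Qed.
End S.

Section Mp.
Context {R : realType} {T : pseudoMetricType R}.
Local Notation SA := (@Mp_measurable R T).
Local Notation MT := ((T -> R) -> nat).

Lemma mp_gen (A : set (T -> R)) (B : set (\bar R)) : C0_borel A -> measurable B ->
  SA [set m | Mp m /\ B (pm_count m A)].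
Proof. by move=> hA hB; apply: sub_gen_smallest; exists A, B. Qed.

Lemma mp_diff (A : set MT) : SA A -> SA (Mp `\` A).
Proof. by have [_ h _] := smallest_sigma_algebra (@Mp R T) Mp_gen; apply: h. Qed.

Lemma mp0 : SA set0.
Proof. by have [h _ _] := smallest_sigma_algebra (@Mp R T) Mp_gen. Qed.

Lemma mpT : SA Mp.
Proof. by rewrite -(setD0 Mp); apply: mp_diff; apply: mp0. Qed.

Lemma mp_bigcup (F : (set MT)^nat) : (forall n, SA (F n)) -> SA (\bigcup_n F n).
Proof. by have [_ _ h] := smallest_sigma_algebra (@Mp R T) Mp_gen; apply: h. Qed.

Lemma mp_U (A B : set MT) : SA A -> SA B -> SA (A `|` B).
Proof.
move=> hA hB.
have -> : A `|` B = \bigcup_n (if n == 0%N then A else B).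
  apply/seteqP; split => [x [Ax|Bx]|x [n _]].
  - by exists 0%N.
  - by exists 1%N.
  - by case: ifP => _ h; [left|right].
by apply: mp_bigcup => n; case: ifP.
Qed.

Lemma mp_I (A B : set MT) : A `<=` Mp -> B `<=` Mp -> SA A -> SA B -> SA (A `&` B).
Proof.
move=> sA sB hA hB.
have -> : A `&` B = Mp `\` ((Mp `\` A) `|` (Mp `\` B)).
  apply/seteqP; split => [x [Ax Bx]|x [Mx]].
  - by split; [exact: sA|move=> [[_]|[_]]].
  - move=> h; split; apply: contrapT => h'; apply: h; [left|right] => //.
by apply: mp_diff; apply: mp_U; apply: mp_diff.
Qed.

Lemma mp_countable (I : countType) (F : I -> set MT) : (forall i, SA (F i)) ->
  SA (\bigcup_i F i).
Proof.
move=> hF.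
have -> : \bigcup_i F i = \bigcup_(n in [set: nat]) (oapp F (@classical_sets.set0 MT) (choice.unpickle n)).
  apply/seteqP; split => [x [i _ Fi]|x [n _]].
  - by exists (choice.pickle i) => //; rewrite choice.pickleK.
  - by case: (choice.unpickle n) => [i|] //= Fi; exists i.
by apply: mp_bigcup => n; case: (choice.unpickle n) => [i|] /=; [apply: hF|apply: mp0].
Qed.

Lemma pm_pos (m : MT) (A : set (T -> R)) :
  pm_count m A != 0%E <-> exists f, A f /\ (0 < m f)%N.
Proof.
split.
  move=> h; apply: contrapT => hn; move/eqP: h; apply.
  apply: esum1 => f Af; case: (posnP (m f)) => [->//|mf].
  by exfalso; apply: hn; exists f.
move=> [f [Af mf]]; apply/negP => /eqP h.
have : (1 <= pm_count m A)%E.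
  apply: esum_ge; exists [set f].
    by split; [exact: finite_set1|move=> x ->].
  by rewrite fsbig_set1 lee_fin ler1n.
by rewrite h lee_fin ler10.
Qed.
End Mp.


Section Minus.
Context {R : realType} {T : pseudoMetricType R}.
Hypothesis cT : compact [set: T].
Local Notation MT := ((T -> R) -> nat).

Lemma ckminus_meas (K : set T) (hK : closed K) (g : T -> R) :
  {within K, continuous g} -> Mp_measurable (CKminus K g).
Proof.
move=> hg.
pose A := [set f : T -> R | C0 f /\ exists s, K s /\ g s <= f s].
have oG : C0_open (C0 `\` A).
  split; first by move=> f [].
  move=> f [Cf nA]; have [cf _] := Cf.
  have hlt : forall s, K s -> f s < g s.
    move=> s Ks; rewrite ltNge; apply/negP => h; apply: nA; split => //.
    by exists s.
  case: (pselect (K !=set0)) => [K0|K0]; last first.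
    exists 1 => // h Ch _; split => // -[_ [s [Ks _]]]; apply: K0; by exists s.
  have cK : compact K := subclosed_compact hK cT (@subsetT _ K).
  have := @compact_EVT_min _ R (g - f) K K0 cK
    (within_continuousB hg (continuous_subspaceT cf)).
  case => c; rewrite in_setE => Kc hc.
  exists (g c - f c); first by rewrite subr_gt0 hlt.
  move=> h Ch hd; split => // -[_ [s [Ks hs]]].
  have := hc s; rewrite in_setE => /(_ Ks) /= hcs.
  have [ch _] := Ch; have := @le_supdist _ _ cT f h s cf ch.
  have := ler_norm (h s - f s); have := distrC (h s) (f s).
  have hcs' : g c - f c <= g s - f s by exact: hcs.
  lra.
have -> : CKminus K g = [set m : MT | Mp m /\ [set 0%E] (pm_count m A)].
  apply/seteqP; split.
  - move=> m [hm hall]; split => //=; apply: contrapT => /eqP h.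
    have [f [[Cf [s [Ks hs]]] mf]] := (pm_pos m A).1 h.
    have := hall f mf s Ks; lra.
  - move=> m [hm h0]; split => // f mf s Ks; rewrite ltNge; apply/negP => hs.
    have : pm_count m A != 0%E.
      apply/(pm_pos m A).2; exists f; split => //; split; last by exists s.
      by have [hC _] := hm; apply: hC.
    by rewrite /= h0 eqxx.
apply: mp_gen; last exact: emeasurable_set1.
have -> : A = C0 `\` (C0 `\` A).
  apply/seteqP; split => [f Af|f [Cf h]].
  - by split; [case: Af|move=> [_]].
  - by apply: contrapT => nA; apply: h.
by apply: borel_diff; apply: borel_open.
Qed.
End Minus.

Section Plus.
Context {R : realType} {T : pseudoMetricType R}.
Hypothesis cT : compact [set: T].
Variable K : set T.
Hypothesis hK : closed K.
Variable N : nat -> seq T.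
Hypothesis hN : forall n t, exists x, x \in N n /\ ball x (n.+1%:R^-1) t.
Local Notation MT := ((T -> R) -> nat).
Local Notation SA := (@Mp_measurable R T).

Definition Pgood (i0 : Idx) (ls : seq Idx) : Prop :=
  forall f', Ub N i0 f' -> forall G' : Idx -> (T -> R),
  (forall j, j \in ls -> Ub N j (G' j)) ->
  forall t, K t -> exists j, j \in ls /\ f' t < G' j t.

Definition EL (l : seq Idx) : set MT :=
  [set m | Mp m /\ forall j, j \in l -> pm_count m (Ub N j) != 0%E].

Definition SL (l : seq Idx) : set MT :=
  [set m | (match l with i0 :: ls => Pgood i0 ls | [::] => False end) /\ EL l m].

Lemma EL_meas l : SA (EL l).
Proof.
elim: l => [|j l IH].
  have -> : EL [::] = Mp by apply/seteqP; split => [m []|m hm] //; split.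
  exact: mpT.
have -> : EL (j :: l) = [set m | Mp m /\ (~` [set 0%E]) (pm_count m (Ub N j))] `&` EL l.
  apply/seteqP; split.
  - move=> m [hm h]; split; split => //.
    + by move/eqP: (h j (mem_head _ _)).
    + by move=> k kl; apply: h; rewrite inE kl orbT.
  - move=> m [[hm h1] [_ h2]]; split => // k; rewrite inE => /orP[/eqP->|kl].
    + by apply/eqP.
    + exact: h2.
apply: mp_I.
- by move=> m [].
- by move=> m [].
- apply: mp_gen; first exact: Ub_borel.
  apply: measurableC; exact: emeasurable_set1.
- exact: IH.
Qed.

Lemma SL_meas l : SA (SL l).
Proof.
case: (pselect (match l with i0 :: ls => Pgood i0 ls | [::] => False end)) => P.
  have -> : SL l = EL l by apply/seteqP; split => [m []|m h].
  exact: EL_meas.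
have -> : SL l = set0 by apply/seteqP; split => // m [].
exact: mp0.
Qed.

Lemma CKplus_eq : CKplus K = Mp `\` \bigcup_l SL l.
Proof.
apply/seteqP; split.
  move=> m [hm hall]; split => //.
  move=> [l _ [Pl [_ hpos]]]; case: l Pl hpos => [//|i0 ls] Pl hpos.
  have [f' [Uf' af']] := (pm_pos _ _).1 (hpos i0 (mem_head _ _)).
  have /choice [G' hG'] : forall j, exists g, j \in ls -> Ub N j g /\ (0 < m g)%N.
    move=> j; case: (boolP (j \in ls)) => jl; last by exists (fun=> 0).
    have [g [Ug ag]] := (pm_pos _ _).1 (hpos j ltac:(by rewrite inE jl orbT)).
    by exists g.
  have [s Ks hs] := hall f' af'.
  have [j [jl hj]] := Pl f' Uf' G' (fun j jl => (hG' j jl).1) s Ks.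
  have := @maxM_ge _ _ cT m (G' j) s hm (hG' j jl).2; lra.
move=> m [hm hnot]; split => // f af; apply: contrapT => hn.
have hlt : forall s, K s -> f s < maxM m s.
  move=> s Ks; rewrite ltNge; apply/negP => h; apply: hn; by exists s.
have [hC _] := hm; have Cf := hC f af; have [cf [f0 _]] := Cf.
have /choice [G hG] : forall s, exists g, K s -> atoms m g /\ f s < g s.
  move=> s; case: (pselect (K s)) => Ks; last by exists f.
  have [g hg] := @maxM_gt _ _ m f s (f0 s) (hlt s Ks); by exists g.
pose Q := fun s (r : R) t => r < G s t - f t.
have H0 : forall s, K s -> exists r, 0 < r /\ exists U, nbhs s U /\
    forall t, K t -> U t -> Q s r t.
  move=> s Ks; have [ag fg] := hG s Ks; have [cg _] := hC _ ag.
  have cs : {for s, continuous (fun t => G s t - f t)}.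
    by apply: cvgB; [exact: cg|exact: cf].
  have [rho rho0 Hr] := @cont_ball _ _ _ s cs ((G s s - f s)/2) ltac:(lra).
  exists ((G s s - f s)/2); split; first lra.
  exists (ball s rho); split; first exact: nbhsx_ballx.
  move=> t _ st; have := Hr t st; rewrite /Q.
  have := ler_norm ((G s s - f s) - (G s t - f t)); lra.
have cK : compact K := subclosed_compact hK cT (@subsetT _ K).
have [d [d0 [l [lK Hl]]]] := @cover_fin _ _ K Q cK H0.
have [c] := @rat_in_itvoo R 0 (d / 8) ltac:(lra).
rewrite in_itv /= => /andP[c0 c8].
have c0' : (0 < c)%R by rewrite -(ltr0q R).
have /choice [ix hix] : forall g : T -> R, exists i : Idx, C0 g -> i.2 = c /\ Ub N i g.
  move=> g; case: (pselect (C0 g)) => Cg; last by exists (0%N, [::], c).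
  have [n [q hU]] := @Ub_cover _ _ cT N g c Cg c0'; by exists (n, q, c).
apply: hnot; exists (ix f :: map (fun x => ix (G x)) l) => //.
split; last split => //.
  move=> f' Uf' G' hG' t Kt.
  have [x [xl [r [dr hr]]]] := Hl t Kt.
  have Kx := lK x xl.
  exists (ix (G x)); split; first by apply/mapP; exists x.
  have CG : C0 (G x) := hC _ (hG x Kx).1.
  have [hc1 hU1] := hix f Cf; have [hc2 hU2] := hix (G x) CG.
  have := @Ub_close _ _ N hN _ _ _ Uf' hU1 t; rewrite hc1 => h1.
  have := @Ub_close _ _ N hN _ _ _ (hG' _ ltac:(by apply/mapP; exists x)) hU2 t; rewrite hc2 => h2.
  have := ler_norm (f' t - f t); have := ler_norm (G x t - G' (ix (G x)) t).
  have := distrC (G' (ix (G x)) t) (G x t); rewrite /Q in hr; lra.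
move=> j; rewrite inE => /orP[/eqP->|/mapP[x xl ->]]; apply/(pm_pos _ _).2.
  by exists f; split => //; have [_ ?] := hix f Cf.
have Kx := lK x xl; have [ag _] := hG x Kx.
by exists (G x); split => //; have [_ ?] := hix (G x) (hC _ ag).
Qed.

Lemma ckplus_meas : SA (CKplus K).
Proof.
rewrite CKplus_eq; apply: mp_diff; apply: mp_countable => l; exact: SL_meas.
Qed.
End Plus.

Theorem lemma4 (R : realType) (T : pseudoMetricType R)
  (hT : hausdorff_space T) (cT : compact [set: T]) (K : set T) (hK : closed K) :
  Mp_measurable (CKplus K) /\
  forall g : T -> R, {within K, continuous g} -> Mp_measurable (CKminus K g).
Proof.
have /choice [N hN] : forall n : nat, exists l : seq T,
    forall t, exists x, x \in l /\ ball x (n.+1%:R^-1) t.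
  by move=> n; apply: (nets cT); rewrite invr_gt0 ltr0n.
split; first exact: (@ckplus_meas R T cT K hK N hN).
by move=> g hg; apply: ckminus_meas.
Qed.
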